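(* Let $n_{k'}\le n_k$. The restriction of $Z_{k,k'}$ to $\operatorname{ran}(Z_{k,k'}^*Z_{k,k'})$, and the restriction of $Z_{k,k'}^*$ to $E_{k'}$, are isometric isomorphisms between the subspaces $\operatorname{ran}(Z_{k,k'}^*Z_{k,k'})\subset E_k$ and $E_{k'}$ (in the respective directions).
   Context: Let $\mathcal H$ be a finite-dimensional complex Hilbert space and $E_k,E_{k'}$ mutually orthogonal subspaces with $n_k=\dim E_k$, $n_{k'}=\dim E_{k'}$ and orthonormal bases $\{|a_k\rangle:0\le a\le n_k-1\}$, $\{|b_{k'}\rangle:0\le b\le n_{k'}-1\}$. For vectors $x,y$, $|x\rangle\langle y|$ is the operator $u\mapsto\langle y,u\rangle x$. $\zeta_k=e^{2\pi i/n_k}$. The transition operator is $Z_{k,k'}=n_k^{-1/2}\sum_{b=0}^{n_{k'}-1}\sum_{a=0}^{n_k-1}\zeta_k^{ba}|b_{k'}\rangle\langle a_k|$ (an operator on $\mathcal H$). *)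

(* Defs.v *)
From HB Require Import structures.
From mathcomp Require Import all_boot all_order all_algebra.
From mathcomp Require Import reals trigo.
From mathcomp.real_closed Require Import complex.
Set Implicit Arguments. Unset Strict Implicit. Unset Printing Implicit Defensive.
Import Order.TTheory GRing.Theory Num.Theory.
Local Open Scope ring_scope.

(* The Hilbert space H is modelled as C^d (column vectors), C = R[i]. *)

Definition dotc (R : realType) (d : nat) (y u : 'cV[R[i]]_d) : R[i] :=
  \sum_(i < d) (y i 0)^* * u i 0.

(* the operator |x><y| : u |-> <y,u> x, as a d x d matrix *)
Definition ketbra (R : realType) (d : nat) (x y : 'cV[R[i]]_d) : 'M[R[i]]_d :=
  x *m (map_mx Num.conj y)^T.

Definition adjc (R : realType) (d : nat) (A : 'M[R[i]]_d) : 'M[R[i]]_d :=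
  (map_mx Num.conj A)^T.

Definition zeta (R : realType) (n : nat) : R[i] :=
  Complex (cos (2 * pi / n%:R)) (sin (2 * pi / n%:R)).

Definition Zop (R : realType) (d nk nk' : nat)
  (a : 'I_nk -> 'cV[R[i]]_d) (b : 'I_nk' -> 'cV[R[i]]_d) : 'M[R[i]]_d :=
  Complex ((Num.sqrt (nk%:R : R))^-1) 0 *:
    \sum_(j < nk') \sum_(i < nk) zeta R nk ^+ (j * i) *: ketbra (b j) (a i).

Definition orthonormal_fam (R : realType) (d m : nat) (e : 'I_m -> 'cV[R[i]]_d) :=
  forall i j, dotc (e i) (e j) = (i == j)%:R.

Definition in_span (R : realType) (d m : nat) (e : 'I_m -> 'cV[R[i]]_d)
  (x : 'cV[R[i]]_d) := exists c : 'I_m -> R[i], x = \sum_(i < m) c i *: e i.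

Definition in_ran (R : realType) (d : nat) (A : 'M[R[i]]_d) (x : 'cV[R[i]]_d) :=
  exists y, x = A *m y.

Definition isometric_iso (R : realType) (d : nat) (T : 'M[R[i]]_d)
  (P Q : 'cV[R[i]]_d -> Prop) :=
  [/\ forall x, P x -> Q (T *m x),
      forall x, P x -> dotc (T *m x) (T *m x) = dotc x x,
      forall x y, P x -> P y -> T *m x = T *m y -> x = y &
      forall y, Q y -> exists2 x, P x & T *m x = y].

(* Main.v *)
Require Import Defs.
From mathcomp Require Import all_boot all_order all_algebra.
From mathcomp Require Import reals trigo.
From mathcomp.real_closed Require Import complex.
From mathcomp Require Import ring lra.
Set Implicit Arguments. Unset Strict Implicit.
Import Order.TTheory GRing.Theory Num.Theory.
Local Open Scope ring_scope.

Section Roots.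
Variable R : realType.

Lemma cmulE (a b c e : R) :
  (Complex a b : R[i]) * Complex c e = Complex (a * c - b * e) (a * e + b * c).
Proof. by []. Qed.

Lemma demoivre (t : R) m :
  (Complex (cos t) (sin t) : R[i]) ^+ m = Complex (cos (t *+ m)) (sin (t *+ m)).
Proof.
elim: m => [|m IH]; first by rewrite expr0 !mulr0n cos0 sin0.
rewrite exprS IH cmulE mulrS cosD sinD; congr Complex; ring.
Qed.

Lemma zetaX n m : zeta R n ^+ m =
  Complex (cos ((2 * pi / n%:R) *+ m)) (sin ((2 * pi / n%:R) *+ m)).
Proof. by rewrite /zeta demoivre. Qed.

Lemma zeta_n n : (0 < n)%N -> zeta R n ^+ n = 1.
Proof.
move=> n0; rewrite zetaX -mulr_natr divfK ?pnatr_eq0 -?lt0n //.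
by rewrite mulr_natl cos2pi sin2pi.
Qed.

Lemma zeta_neq1 n m : (0 < m < n)%N -> zeta R n ^+ m != 1.
Proof.
case/andP=> m0 mn; have n0 : (0 < n)%N by apply: leq_trans mn.
rewrite zetaX; apply/negP => /eqP [] hc _.
pose y : R := pi * m%:R / n%:R.
have ey : (2 * pi / n%:R) *+ m = y *+ 2.
  rewrite -(mulr_natr (2 * pi / n%:R) m) -(mulr_natr y 2) /y; ring.
have ypos : 0 < y < pi.
  apply/andP; split.
    by rewrite /y divr_gt0 ?mulr_gt0 ?pi_gt0 ?ltr0n.
  rewrite /y ltr_pdivrMr ?ltr0n // ltr_pM2l ?pi_gt0 // ltr_nat //.
have := sin_gt0_pi ypos.
move: hc; rewrite ey cos_mulr2n cos2sin2 !mulr2n => h sp.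
have s0 : sin y ^+ 2 = 0 by lra.
by move: (exprn_gt0 2 sp); rewrite s0 ltxx.
Qed.


Lemma zeta_conj n : Num.conj (zeta R n) * zeta R n = 1.
Proof.
rewrite /zeta [Num.conj _]/= cmulE.
apply/eqP; rewrite eq_complex /=; apply/andP; split; apply/eqP.
  by rewrite mulNr opprK -!expr2 cos2Dsin2.
by ring.
Qed.

Lemma zetaX_conj n m : Num.conj (zeta R n ^+ m) * zeta R n ^+ m = 1.
Proof. by rewrite rmorphXn -exprMn zeta_conj expr1n. Qed.

Lemma zeta_inj n j j' : (j < n)%N -> (j' < n)%N ->
  zeta R n ^+ j = zeta R n ^+ j' -> j = j'.
Proof.
wlog le : j j' / (j <= j')%N.
  move=> W jn j'n e; case: (leqP j j') => h; first exact: W.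
  by symmetry; apply: W => //; apply: ltnW.
move=> jn j'n e; apply/eqP; rewrite eqn_leq le /= leqNgt; apply/negP => lt.
have h : zeta R n ^+ (j' - j) = 1.
  have h1 := zetaX_conj n j; rewrite [in X in _ * X]e -(subnKC le) exprD mulrA zetaX_conj mul1r in h1.
  exact: h1.
have : (0 < j' - j < n)%N by rewrite subn_gt0 lt /=; apply: leq_ltn_trans j'n; apply: leq_subr.
by move/zeta_neq1; rewrite h eqxx.
Qed.


Lemma zeta_sum n j j' : (j < n)%N -> (j' < n)%N ->
  \sum_(i < n) zeta R n ^+ (j * i) * Num.conj (zeta R n ^+ (j' * i))
  = (j == j')%:R * n%:R.
Proof.
move=> jn j'n; have n0 : (0 < n)%N by apply: leq_ltn_trans jn.
pose u := zeta R n ^+ j * Num.conj (zeta R n ^+ j').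
have -> : \sum_(i < n) zeta R n ^+ (j * i) * Num.conj (zeta R n ^+ (j' * i))
  = \sum_(i < n) u ^+ i.
  by apply: eq_bigr => i _; rewrite /u exprMn !exprM rmorphXn.
have [e|ne] := eqVneq j j'.
  have -> : u = 1 by rewrite /u e mulrC zetaX_conj.
  by rewrite mul1r (eq_bigr (fun _ => 1)) => [|i _]; rewrite ?expr1n // sumr_const card_ord.
rewrite mul0r.
have un : u ^+ n = 1.
  rewrite /u exprMn -rmorphXn -!exprM mulnC exprM zeta_n // expr1n.
  by rewrite mulnC exprM zeta_n // expr1n rmorph1 mulr1.
have u1 : u - 1 != 0.
  rewrite subr_eq0; apply/negP => /eqP u1.
  have : zeta R n ^+ j = zeta R n ^+ j'.
    by rewrite -[LHS]mulr1 -(zetaX_conj n j') mulrA -/u u1 mul1r.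
  by move/zeta_inj => /(_ jn j'n) /eqP; rewrite (negbTE ne).
have := subrX1 u n; rewrite un subrr => /esym/eqP; rewrite mulf_eq0 (negbTE u1) /=.
by move/eqP.
Qed.


Local Notation C := (R[i]).

Definition adj' m n (X : 'M[C]_(m, n)) : 'M[C]_(n, m) := (map_mx Num.conj X)^T.

Lemma adj'_mul m n p (X : 'M[C]_(m, n)) (Y : 'M[C]_(n, p)) :
  adj' (X *m Y) = adj' Y *m adj' X.
Proof. by rewrite /adj' map_mxM trmx_mul. Qed.

Lemma adj'K m n (X : 'M[C]_(m, n)) : adj' (adj' X) = X.
Proof. by apply/matrixP => i j; rewrite !mxE conjCK. Qed.

Lemma dotcE d (x y : 'cV[C]_d) : dotc x y = (adj' x *m y) 0 0.
Proof. by rewrite /dotc mxE; apply: eq_bigr => i _; rewrite !mxE. Qed.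

Lemma dotc_adj d (A : 'M[C]_d) (x y : 'cV[C]_d) :
  dotc (A *m x) y = dotc x (adjc A *m y).
Proof. by rewrite !dotcE adj'_mul mulmxA. Qed.

Lemma adjcK d (A : 'M[C]_d) : adjc (adjc A) = A.
Proof. exact: adj'K. Qed.

Definition Bmx d m (b : 'I_m -> 'cV[C]_d) : 'M[C]_(d, m) := \matrix_(r, j) b j r 0.

Lemma span_B d m (b : 'I_m -> 'cV[C]_d) (e : 'cV[C]_m) : in_span b (Bmx b *m e).
Proof.
exists (fun j => e j 0); apply/matrixP => r s; rewrite !mxE summxE.
by apply: eq_bigr => j _; rewrite !mxE (ord1 s) mulrC.
Qed.

Lemma span_B' d m (b : 'I_m -> 'cV[C]_d) x : in_span b x -> exists e, x = Bmx b *m e.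
Proof.
case=> c ->; exists (\col_j c j); apply/matrixP => r s; rewrite !mxE summxE.
by apply: eq_bigr => j _; rewrite !mxE (ord1 s) mulrC.
Qed.

Lemma ortho_B d m (b : 'I_m -> 'cV[C]_d) : orthonormal_fam b ->
  adj' (Bmx b) *m Bmx b = 1%:M.
Proof.
move=> ob; apply/matrixP => i j; rewrite !mxE -ob /dotc.
by apply: eq_bigr => r _; rewrite !mxE.
Qed.


Definition cst (n : nat) : C := Complex (Num.sqrt (n%:R : R))^-1 0.

Definition Mx (nk nk' : nat) : 'M[C]_(nk', nk) :=
  \matrix_(j, i) (cst nk * zeta R nk ^+ (j * i)).

Lemma Zop_eq d nk nk' (a : 'I_nk -> 'cV[C]_d) (b : 'I_nk' -> 'cV[C]_d) :
  Zop a b = Bmx b *m Mx nk nk' *m adj' (Bmx a).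
Proof.
apply/matrixP => r s; rewrite /Zop !mxE summxE.
transitivity (\sum_(j < nk') \sum_(i < nk)
   cst nk * zeta R nk ^+ (j * i) * (b j r 0 * Num.conj (a i s 0))).
  rewrite mulr_sumr; apply: eq_bigr => j _; rewrite summxE mulr_sumr; apply: eq_bigr => i _.
  rewrite !mxE big_ord1 !mxE /cst mulrA //.
rewrite exchange_big /=; apply: eq_bigr => i _.
rewrite !mxE mulr_suml; apply: eq_bigr => j _.
rewrite !mxE; ring.
Qed.


Lemma cst_norm n : (0 < n)%N -> cst n * Num.conj (cst n) * n%:R = 1.
Proof.
move=> n0; pose s : R := (Num.sqrt (n%:R : R))^-1.
have -> : cst n * Num.conj (cst n) = real_complex R (s * s).
  by rewrite /cst [Num.conj _]/= cmulE /s; congr Complex; ring.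
rewrite -(rmorph_nat (real_complex R)) -rmorphM /s -invfM -expr2 sqr_sqrtr ?ler0n //.
by rewrite mulVf ?pnatr_eq0 -?lt0n.
Qed.

Lemma Mx_unitary nk nk' : (nk' <= nk)%N -> Mx nk nk' *m adj' (Mx nk nk') = 1%:M.
Proof.
move=> le; apply/matrixP => j j'; rewrite !mxE.
have n0 : (0 < nk)%N by apply: leq_trans le; apply: leq_ltn_trans (ltn_ord j).
transitivity (cst nk * Num.conj (cst nk) *
  \sum_(i < nk) zeta R nk ^+ (j * i) * Num.conj (zeta R nk ^+ (j' * i))).
  rewrite mulr_sumr; apply: eq_bigr => i _; rewrite !mxE rmorphM; ring.
rewrite zeta_sum ?(leq_trans (ltn_ord _) le) //.
rewrite mulrCA cst_norm // mulr1 (inj_eq val_inj).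
by case: (j == j').
Qed.
End Roots.

Theorem proposition2p6 (R : realType) (d nk nk' : nat)
  (a : 'I_nk -> 'cV[R[i]]_d) (b : 'I_nk' -> 'cV[R[i]]_d) :
  orthonormal_fam a -> orthonormal_fam b ->
  (forall i j, dotc (a i) (b j) = 0) ->
  (nk' <= nk)%N ->
  let Z := Zop a b in
  let S := in_ran (adjc Z *m Z) in
  (forall x, S x -> in_span a x) /\
  isometric_iso Z S (in_span b) /\
  isometric_iso (adjc Z) (in_span b) S.
Proof.
move=> oa ob _ le Z S.
have ZE : Z = Bmx b *m Mx R nk nk' *m adj' (Bmx a) := Zop_eq a b.
have ZsE : adjc Z = Bmx a *m adj' (Mx R nk nk') *m adj' (Bmx b).
  have -> : adjc Z = adj' Z by [].
  by rewrite ZE !adj'_mul adj'K mulmxA.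
have hA : forall y, in_span b (Z *m y).
  by move=> y; rewrite ZE -!mulmxA; apply: span_B.
have hB : forall y, in_span a (adjc Z *m y).
  by move=> y; rewrite ZsE -!mulmxA; apply: span_B.
have hC : forall y, in_span b y -> Z *m (adjc Z *m y) = y.
  move=> y /span_B' [e ->]; rewrite ZsE ZE -!mulmxA.
  rewrite (mulmxA (adj' (Bmx b))) ortho_B // mul1mx.
  rewrite (mulmxA (adj' (Bmx a))) ortho_B // mul1mx.
  by rewrite (mulmxA (Mx R nk nk')) Mx_unitary // mul1mx.
split; first by move=> x [y ->]; rewrite -mulmxA; apply: hB.
split; split.
- by move=> x [y ->]; apply: hA.
- move=> x [y ->]; rewrite -!mulmxA hC ?hA //.
  by rewrite [RHS]dotc_adj adjcK hC ?hA.
- by move=> x1 x2 [y1 ->] [y2 ->]; rewrite -!mulmxA !hC ?hA // => ->.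
- move=> y yb; exists (adjc Z *m y); last by rewrite hC.
  by exists (adjc Z *m y); rewrite -mulmxA hC.
- by move=> y yb; exists (adjc Z *m y); rewrite -mulmxA hC.
- by move=> y yb; rewrite dotc_adj adjcK hC.
- by move=> y1 y2 h1 h2 e; rewrite -(hC y1 h1) -(hC y2 h2) e.
- by move=> x [v ->]; exists (Z *m v); [apply: hA | rewrite mulmxA].
Qed.
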